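(* Let $s$ be a positive integer such that $(s-\bar k)>(\bar k+1)\big[(\sqrt{\rho_+(s)/\rho_-(s)}+1)\frac{2\rho_+(1)}{\rho_-(s)}\big]^2$, and run Algorithm FoBa-gdt with $\epsilon>\frac{2\sqrt2\rho_+(1)}{\rho_-(s)}\|\nabla Q(\bar\beta)\|_\infty$. Let $\beta^{(k)}$ be the output and $F^{(k)}$ its support. Let $\gamma=\frac{2\sqrt2\,\epsilon}{\rho_-(s)}$ and $\bar\Delta=|\{j\in\bar F-F^{(k)}:|\bar\beta_j|<\gamma\}|$. Then $$\|\beta^{(k)}-\bar\beta\|^2\le\frac{8\epsilon^2}{\rho_-(s)^2}\bar\Delta,\qquad Q(\beta^{(k)})-Q(\bar\beta)\le\frac{\epsilon^2}{\rho_-(s)}\bar\Delta,$$ $$\frac{\rho_-(s)^2}{8\rho_+(1)^2}|F^{(k)}-\bar F|\le|\bar F-F^{(k)}|\le2\bar\Delta.$$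
   Context: Let $Q:\mathbb{R}^d\to\mathbb{R}$ be convex and continuously differentiable. $e_j$ is the $j$-th standard basis vector, $\mathrm{supp}(\beta)=\{j:\beta_j\ne0\}$, $\|\beta\|_0=|\mathrm{supp}(\beta)|$, $\|\cdot\|$ is the Euclidean norm, $A-B$ is set difference, and $v_S$ is $v$ restricted to the coordinates in $S$. For $F\subseteq\{1,\dots,d\}$, $\hat\beta(F)$ denotes a minimizer of $Q$ over $\{\beta:\mathrm{supp}(\beta)\subseteq F\}$ (assumed to exist). For a positive integer $s$, the restricted strong convexity constants $\rho_-(s),\rho_+(s)>0$ are constants such that for all $\beta,\beta'\in\mathbb{R}^d$ with $\|\beta'-\beta\|_0\le s$: $\frac{\rho_-(s)}{2}\|\beta'-\beta\|^2\le Q(\beta')-Q(\beta)-\langle\nabla Q(\beta),\beta'-\beta\rangle\le\frac{\rho_+(s)}{2}\|\beta'-\beta\|^2.$ $\bar\beta$ is a solution of $\min_\beta Q(\beta)$ subject to $\|\beta\|_0\le\bar k$, $\bar F=\mathrm{supp}(\bar\beta)$ and $\bar k=|\bar F|$. Algorithm FoBa has two variants: FoBa-obj (parameter $\delta>0$) and FoBa-gdt (parameter $\epsilon>0$). Initialize $F^{(0)}=\emptyset$, $\beta^{(0)}=0$, $k=0$, and repeat the following iteration. (1) Stopping test: FoBa-obj stops if $Q(\beta^{(k)})-\min_{\alpha\in\mathbb{R},\,j\notin F^{(k)}}Q(\beta^{(k)}+\alpha e_j)<\delta$; FoBa-gdt stops if $\|\nabla Q(\beta^{(k)})\|_\infty<\epsilon$.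 On stopping the output is $\beta^{(k)}$ with support $F^{(k)}$, and the algorithm is said to terminate at $k$. (2) Forward step: FoBa-obj picks $i^{(k)}\in\arg\min_{i\notin F^{(k)}}\min_\alpha Q(\beta^{(k)}+\alpha e_i)$; FoBa-gdt picks $i^{(k)}\in\arg\max_{i\notin F^{(k)}}|\nabla Q(\beta^{(k)})_i|$. Set $F^{(k+1)}=F^{(k)}\cup\{i^{(k)}\}$, $\beta^{(k+1)}=\hat\beta(F^{(k+1)})$, $\delta^{(k+1)}=Q(\beta^{(k)})-Q(\beta^{(k+1)})$, $k\leftarrow k+1$. (3) Backward step: repeat — if $F^{(k)}=\emptyset$ or $\min_{i\in F^{(k)}}Q(\beta^{(k)}-\beta^{(k)}_ie_i)-Q(\beta^{(k)})\ge\delta^{(k)}/2$, leave the backward step; otherwise pick $j\in\arg\min_{i\in F^{(k)}}Q(\beta^{(k)}-\beta^{(k)}_ie_i)$, set $F^{(k-1)}=F^{(k)}-\{j\}$, $\beta^{(k-1)}=\hat\beta(F^{(k-1)})$, $k\leftarrow k-1$ (where $\delta^{(k-1)}$ is the value recorded at the most recent forward step producing index $k-1$). Thus $|F^{(k)}|=k$ always. ''At the beginning of an iteration'' means the state just before a stopping test. *)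

(* Defs.v *)
From Stdlib Require Import Reals.
From mathcomp Require Import all_boot.
Set Implicit Arguments. Unset Strict Implicit. Unset Printing Implicit Defensive.

Open Scope R_scope.

Definition vec (d : nat) := 'I_d -> R.

Definition Reqb (x y : R) : bool := if Req_EM_T x y then true else false.
Definition Rltb (x y : R) : bool := if Rlt_dec x y then true else false.

Definition vadd d (u v : vec d) : vec d := fun i => u i + v i.
Definition vsub d (u v : vec d) : vec d := fun i => u i - v i.
Definition vscale d (a : R) (u : vec d) : vec d := fun i => a * u i.
Definition vzero d : vec d := fun _ => 0.
Definition basis d (j : 'I_d) : vec d := fun i => if i == j then 1 else 0.

Definition inner d (u v : vec d) : R := \big[Rplus/0]_(i < d) (u i * v i).
Definition norm2 d (u : vec d) : R := inner u u.
Definition norm d (u : vec d) : R := sqrt (norm2 u).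
Definition norm_inf d (u : vec d) : R := \big[Rmax/0]_(i < d) Rabs (u i).

Definition supp d (u : vec d) : {set 'I_d} := [set j | ~~ Reqb (u j) 0].
Definition l0 d (u : vec d) : nat := #|supp u|.

Definition convex d (Q : vec d -> R) : Prop :=
  forall (b b' : vec d) (t : R), 0 <= t <= 1 ->
    Q (vadd (vscale t b) (vscale (1 - t) b')) <= t * Q b + (1 - t) * Q b'.

Definition is_gradient d (Q : vec d -> R) (g : vec d -> vec d) : Prop :=
  forall b : vec d, forall e, 0 < e -> exists del, 0 < del /\
    forall h : vec d, norm h < del ->
      Rabs (Q (vadd b h) - Q b - inner (g b) h) <= e * norm h.

Definition continuous_vec d (g : vec d -> vec d) : Prop :=
  forall b : vec d, forall e, 0 < e -> exists del, 0 < del /\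
    forall b' : vec d, norm (vsub b' b) < del -> norm (vsub (g b') (g b)) < e.

Definition C1_with_grad d (Q : vec d -> R) (g : vec d -> vec d) : Prop :=
  is_gradient Q g /\ continuous_vec g.

(* restricted strong convexity / smoothness: rm = rho_-(s), rp = rho_+(s) *)
Definition RSC d (Q : vec d -> R) (g : vec d -> vec d) (s : nat) (rm rp : R) : Prop :=
  forall b b' : vec d, (l0 (vsub b' b) <= s)%N ->
    rm / 2 * norm2 (vsub b' b) <= Q b' - Q b - inner (g b) (vsub b' b) /\
    Q b' - Q b - inner (g b) (vsub b' b) <= rp / 2 * norm2 (vsub b' b).

Definition restricted_min d (Q : vec d -> R) (F : {set 'I_d}) (b : vec d) : Prop :=
  supp b \subset F /\ forall b' : vec d, supp b' \subset F -> Q b <= Q b'.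

Definition drop_coord d (b : vec d) (i : 'I_d) : vec d :=
  vsub b (vscale (b i) (basis i)).

(* Reachable states of FoBa-gdt with parameter eps.
   foba_iter F b dl : state (F^(k), beta^(k), recorded deltas) at the
     beginning of an iteration (just before a stopping test), k = #|F|.
   foba_back F b dl : state inside the backward-step loop.
   dl m is the value delta^(m) recorded at the most recent forward step
   producing index m. *)
Inductive foba_iter d (Q : vec d -> R) (g : vec d -> vec d) (eps : R)
  : {set 'I_d} -> vec d -> (nat -> R) -> Prop :=
| foba_init : foba_iter Q g eps set0 (@vzero d) (fun _ => 0)
| foba_exit_back : forall F b dl,
    foba_back Q g eps F b dl ->
    (F = set0 \/ forall i, i \in F -> Q (drop_coord b i) - Q b >= dl #|F| / 2) ->
    foba_iter Q g eps F b dl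
with foba_back d (Q : vec d -> R) (g : vec d -> vec d) (eps : R)
  : {set 'I_d} -> vec d -> (nat -> R) -> Prop :=
| foba_forward : forall F b dl i b',
    foba_iter Q g eps F b dl ->
    ~ (norm_inf (g b) < eps) ->
    i \notin F ->
    (forall i', i' \notin F -> Rabs (g b i') <= Rabs (g b i)) ->
    restricted_min Q (i |: F) b' ->
    foba_back Q g eps (i |: F) b'
      (fun m => if m == #|F|.+1 then Q b - Q b' else dl m)
| foba_backward : forall F b dl j b',
    foba_back Q g eps F b dl ->
    j \in F ->
    Q (drop_coord b j) - Q b < dl #|F| / 2 ->
    (forall i, i \in F -> Q (drop_coord b j) <= Q (drop_coord b i)) ->
    restricted_min Q (F :\ j) b' ->
    foba_back Q g eps (F :\ j) b' dl.

Definition foba_gdt_output d (Q : vec d -> R) (g : vec d -> vec d) (eps : R)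
  (F : {set 'I_d}) (b : vec d) : Prop :=
  exists dl, foba_iter Q g eps F b dl /\ norm_inf (g b) < eps.

(* Main.v *)
Require Import Defs.
From Stdlib Require Import Reals.
From mathcomp Require Import all_boot.

From Stdlib Require Import Lra Psatz FunctionalExtensionality.
From HB Require Import structures.
Set Implicit Arguments. Unset Strict Implicit.
Open Scope R_scope.
HB.instance Definition _ := Monoid.isComLaw.Build R 0 Rplus
  (fun a b c => esym (Rplus_assoc a b c)) Rplus_comm Rplus_0_l.

Notation rsum d f := (\big[Rplus/0]_(i < d) f i).

Lemma rsum_le d (f h : 'I_d -> R) : (forall i, f i <= h i) -> rsum d f <= rsum d h.
Proof.
move=> H; apply: (big_ind2 (fun x y => x <= y)) => //; [lra| move=> *; lra].
Qed.

Lemma rsumD d (f h : 'I_d -> R) : rsum d (fun i => f i + h i) = rsum d f + rsum d h.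
Proof. by rewrite big_split. Qed.

Lemma rsumZ d c (f : 'I_d -> R) : rsum d (fun i => c * f i) = c * rsum d f.
Proof.
apply: (big_ind2 (fun x y => x = c * y)); [ring| move=> ????->->; ring | by []].
Qed.

Lemma rsum_ext d (f h : 'I_d -> R) : (forall i, f i = h i) -> rsum d f = rsum d h.
Proof. move=> H; exact: eq_bigr. Qed.

Lemma iter_plus n c : iter n (Rplus c) 0 = c * INR n.
Proof. elim: n => [|n IH]; first (simpl; ring). rewrite [iter _ _ _]/= IH S_INR; ring. Qed.

Lemma rsum_ind d (A : {set 'I_d}) c :
  rsum d (fun i => if i \in A then c else 0) = c * INR #|A|.
Proof.
rewrite -big_mkcond /= big_const iter_plus. done.
Qed.

Lemma rsum_single d (j : 'I_d) c :
  rsum d (fun i => if i == j then c else 0) = c.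
Proof.
have H := rsum_ind [set j] c. rewrite cards1 in H.
change (INR 1) with 1 in H. rewrite Rmult_1_r in H. rewrite -[RHS]H.
apply: rsum_ext => i; by rewrite inE.
Qed.

Lemma bigmax_ge (I : eqType) (r : seq I) (F : I -> R) j : j \in r -> F j <= \big[Rmax/0]_(i <- r) F i.
Proof.
elim: r => [|a r IH] //= ; rewrite in_cons big_cons => /orP [/eqP ->|/IH H].
  apply Rmax_l. eapply Rle_trans; [exact H| apply Rmax_r].
Qed.

Lemma norm_inf_ge d (v : vec d) j : Rabs (v j) <= norm_inf v.
Proof. apply: bigmax_ge. by rewrite mem_index_enum. Qed.

Lemma norm_inf_le d (v : vec d) M : 0 <= M -> (forall j, Rabs (v j) <= M) -> norm_inf v <= M.
Proof.
move=> H0 H; apply: (big_ind (fun x => x <= M)) => //.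
move=> x y ??; by apply Rmax_lub.
Qed.

Lemma norm_inf_ge0 d (v : vec d) : 0 <= norm_inf v.
Proof. apply: (big_ind (fun x => 0 <= x)); [lra| |]. move=> x y ??; eapply Rle_trans; [|apply Rmax_l]; lra.
move=> i _; apply Rabs_pos. Qed.

Lemma Reqb_true x y : Reqb x y = true <-> x = y.
Proof. rewrite /Reqb; case: Req_EM_T => //. Qed.

Lemma in_supp d (u : vec d) j : (j \in supp u) = ~~ Reqb (u j) 0.
Proof. by rewrite inE. Qed.

Lemma notin_supp d (u : vec d) j : j \notin supp u -> u j = 0.
Proof. rewrite in_supp negbK. by move/Reqb_true. Qed.

Lemma supp_sub d (u : vec d) (A : {set 'I_d}) : (forall j, j \notin A -> u j = 0) -> supp u \subset A.
Proof.
move=> H; apply/subsetP => j; rewrite in_supp.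
case hj: (j \in A) => //. rewrite H ?hj //. by rewrite /Reqb; case: Req_EM_T.
Qed.

Lemma supp_zero d (u : vec d) (A : {set 'I_d}) j : supp u \subset A -> j \notin A -> u j = 0.
Proof. move=> /subsetP H hj; apply: notin_supp; apply: contra hj; apply: H. Qed.

Lemma Rltb_true x y : Rltb x y = true <-> x < y.
Proof. rewrite /Rltb; case: Rlt_dec => //. Qed.

Lemma l0_le d (u : vec d) (A : {set 'I_d}) : supp u \subset A -> (l0 u <= #|A|)%N.
Proof. exact: subset_leq_card. Qed.

Definition ebump d (b : vec d) (j : 'I_d) t := vadd b (vscale t (basis j)).

Lemma vsub_ebump d (b : vec d) j t : vsub (ebump b j t) b = vscale t (basis j).
Proof. apply: functional_extensionality => i; rewrite /vsub /ebump /vadd; ring. Qed.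

Lemma inner_basis d (v : vec d) j t : inner v (vscale t (basis j)) = t * v j.
Proof.
rewrite /inner -(rsum_single j (t * v j)). apply: rsum_ext => i.
rewrite /vscale /basis; case: eqP => [e|_]; try subst; ring.
Qed.

Lemma norm2_basis d j t : norm2 (vscale t (basis j) : vec d) = t * t.
Proof.
rewrite /norm2 /inner -(rsum_single j (t * t)). apply: rsum_ext => i.
rewrite /vscale /basis; case: eqP => [e|_]; try subst; ring.
Qed.

Lemma supp_basis d j t : supp (vscale t (basis j) : vec d) \subset [set j].
Proof. apply: supp_sub => i; rewrite inE => /negbTE h; rewrite /vscale /basis h; ring. Qed.

Lemma l0_basis d j t : (l0 (vscale t (basis j) : vec d) <= 1)%N.
Proof. rewrite -(cards1 j). apply: l0_le; apply: supp_basis. Qed.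

Lemma descent d (Q : vec d -> R) g rm1 rp1 (H1 : RSC Q g 1 rm1 rp1) b j t :
  Q (ebump b j t) <= Q b + t * g b j + rp1 / 2 * (t * t).
Proof.
have [_ H] := H1 b (ebump b j t) ltac:(rewrite vsub_ebump; apply: l0_basis).
move: H; rewrite vsub_ebump inner_basis norm2_basis. lra.
Qed.

Lemma zero_grad d (Q : vec d -> R) g rm1 rp1 (H1 : RSC Q g 1 rm1 rp1) (hp : 0 < rp1) b j :
  (forall t, Q b <= Q (ebump b j t)) -> g b j = 0.
Proof.
move=> H. have h1 := H (- g b j / rp1). have h2 := descent H1 b j (- g b j / rp1).
set x := g b j in h1 h2 *.
have e : - x / rp1 * x + rp1 / 2 * (- x / rp1 * (- x / rp1)) = - (x * x) * / (2 * rp1) by field; lra.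
have hi : 0 < / (2 * rp1) by apply Rinv_0_lt_compat; lra.
have : 0 <= - (x * x) * / (2 * rp1) by lra.
move=> h3. have : x * x <= 0 by nra.
nra.
Qed.

Lemma supp_ebump d (b : vec d) (A : {set 'I_d}) j t : supp b \subset A -> j \in A -> supp (ebump b j t) \subset A.
Proof.
move=> Hb hj; apply: supp_sub => i hi. rewrite /ebump /vadd /vscale /basis (supp_zero Hb hi).
case: eqP => [e|_]; last ring. by move: hi; rewrite e hj.
Qed.

Lemma restricted_grad d (Q : vec d -> R) g rm1 rp1 (H1 : RSC Q g 1 rm1 rp1) (hp : 0 < rp1) F b j :
  restricted_min Q F b -> j \in F -> g b j = 0.
Proof.
move=> [Hs Hm] hj; apply: (zero_grad H1 hp) => t; apply: Hm; exact: supp_ebump.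
Qed.

Lemma drop_ebump d (b : vec d) j : drop_coord b j = ebump b j (- b j).
Proof. apply: functional_extensionality => i; rewrite /drop_coord /ebump /vsub /vadd /vscale; ring. Qed.

Lemma drop_cost d (Q : vec d -> R) g rm1 rp1 (H1 : RSC Q g 1 rm1 rp1) (hp : 0 < rp1) F b j :
  restricted_min Q F b -> j \in F -> Q (drop_coord b j) - Q b <= rp1 / 2 * (b j * b j).
Proof.
move=> Hr hj; rewrite drop_ebump. have := descent H1 b j (- b j).
rewrite (restricted_grad H1 hp Hr hj). nra.
Qed.

Lemma forward_gain d (Q : vec d -> R) g rm1 rp1 (H1 : RSC Q g 1 rm1 rp1) (hp : 0 < rp1) F b b' i :
  restricted_min Q (i |: F) b' -> supp b \subset F ->
  Q b' <= Q b - g b i * g b i / (2 * rp1).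
Proof.
move=> [_ Hm] Hb. have h := Hm (ebump b i (- g b i / rp1)) ltac:(apply: supp_ebump; [apply: subset_trans Hb (subsetUr _ _)| by rewrite setU11]).
have h2 := descent H1 b i (- g b i / rp1).
have -> : Q b - g b i * g b i / (2 * rp1) = Q b + - g b i / rp1 * g b i + rp1 / 2 * (- g b i / rp1 * (- g b i / rp1)) by field; lra.
lra.
Qed.

From mathcomp Require Import zify.

Lemma l0_vsub d (b c : vec d) (A B : {set 'I_d}) :
  supp b \subset A -> supp c \subset B -> (l0 (vsub b c) <= #|A| + #|B|)%N.
Proof.
move=> hb hc. have h : supp (vsub b c) \subset A :|: B.
  apply: supp_sub => i; rewrite inE negb_or => /andP [h1 h2].
  rewrite /vsub (supp_zero hb h1) (supp_zero hc h2); ring.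
have := l0_le h. have := cardsUI A B. lia.
Qed.

Lemma two_sided d (Q : vec d -> R) g s rm rp (Hr : RSC Q g s rm rp) b c :
  (l0 (vsub b c) <= s)%N -> (l0 (vsub c b) <= s)%N ->
  rsum d (fun i => rm * ((b i - c i) * (b i - c i)) + g c i * (b i - c i) + g b i * (c i - b i)) <= 0.
Proof.
move=> h1 h2. have [A _] := Hr c b h1. have [B _] := Hr b c h2.
have E : norm2 (vsub c b) = norm2 (vsub b c).
  rewrite /norm2 /inner; apply: rsum_ext => i; rewrite /vsub; ring.
rewrite E in B.
have -> : rsum d (fun i => rm * ((b i - c i) * (b i - c i)) + g c i * (b i - c i) + g b i * (c i - b i))
  = rm * norm2 (vsub b c) + inner (g c) (vsub b c) + inner (g b) (vsub c b).
  by rewrite !rsumD rsumZ.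
lra.
Qed.

Lemma one_sided d (Q : vec d -> R) g s rm rp (Hr : RSC Q g s rm rp) b c :
  (l0 (vsub c b) <= s)%N ->
  Q b - Q c <= rsum d (fun i => g b i * (b i - c i) - rm / 2 * ((b i - c i) * (b i - c i))).
Proof.
move=> h2. have [B _] := Hr b c h2.
have E : norm2 (vsub c b) = norm2 (vsub b c).
  rewrite /norm2 /inner; apply: rsum_ext => i; rewrite /vsub; ring.
have -> : rsum d (fun i => g b i * (b i - c i) - rm / 2 * ((b i - c i) * (b i - c i)))
  = (-1) * inner (g b) (vsub c b) + (- (rm / 2)) * norm2 (vsub b c).
  rewrite /inner /norm2 -!rsumZ -rsumD; apply: rsum_ext => i; rewrite /vsub; ring.
rewrite E in B. lra.
Qed.

Lemma sqrt2_facts : sqrt 2 * sqrt 2 = 2 /\ 1 <= sqrt 2.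
Proof.
split; first by rewrite sqrt_sqrt; lra.
rewrite -sqrt_1; apply: sqrt_le_1_alt; lra.
Qed.

Lemma R_cross rm rp1 eps N gy x : 0 < rm -> 0 < rp1 -> 0 < eps -> 0 <= N ->
  eps * rm > 2 * sqrt 2 * rp1 * N -> Rabs gy <= N -> eps * eps <= 2 * (rp1 * rp1) * (x * x) ->
  rm / 2 * (x * x) + gy * x >= 0.
Proof.
move=> hrm hrp he hN hE hg hx. have [q2 q1] := sqrt2_facts. set q := sqrt 2 in q2 q1 hE.
have ax : 0 <= Rabs x := Rabs_pos x.
have xx : Rabs x * Rabs x = x * x by rewrite -Rabs_mult Rabs_right; nra.
have h1 : eps <= q * rp1 * Rabs x.
  have e : (q * rp1 * Rabs x) * (q * rp1 * Rabs x) = (q * q) * (rp1 * rp1) * (Rabs x * Rabs x) by ring.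
  rewrite q2 xx in e.
  have : 0 <= q * rp1 * Rabs x by apply: Rmult_le_pos; [apply: Rmult_le_pos|]; lra.
  move=> h0. apply: Rnot_lt_le => hc.
  have : (q * rp1 * Rabs x) * (q * rp1 * Rabs x) < eps * eps by apply: Rmult_le_0_lt_compat; lra.
  lra.
have h2 : 2 * Rabs gy < rm * Rabs x.
  have qp : 0 < q * rp1 by nra.
  have a1 : q * rp1 * (2 * Rabs gy) <= 2 * q * rp1 * N by nra.
  have a2 : eps * rm <= rm * (q * rp1 * Rabs x) by nra.
  apply: (Rmult_lt_reg_l (q * rp1)) => //. nra.
have : Rabs (gy * x) <= rm / 2 * (x * x).
  rewrite Rabs_mult -xx. nra.
move=> h. have := Rle_abs (- (gy * x)). rewrite Rabs_Ropp. lra.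
Qed.

Lemma R_small rm eps gb y : 0 < rm -> 0 < eps -> Rabs gb <= eps ->
  rm / 2 * (y * y) + gb * y >= - (eps * eps / (2 * rm)).
Proof.
move=> hrm he hg.
have yy : Rabs y * Rabs y = y * y by rewrite -Rabs_mult Rabs_right; nra.
have ay : 0 <= Rabs y := Rabs_pos y.
have h : - (gb * y) <= eps * Rabs y.
  have := Rle_abs (- (gb * y)). rewrite Rabs_Ropp Rabs_mult. nra.
have : eps * eps / (2 * rm) = (eps * eps) * / (2 * rm) by [].
have hi : 0 < / (2 * rm) by apply Rinv_0_lt_compat; lra.
have e : rm / 2 * (y * y) - eps * Rabs y + eps * eps / (2 * rm) = (rm * Rabs y - eps) * (rm * Rabs y - eps) * / (2 * rm).
  rewrite -yy. field. lra.
have sq : 0 <= (rm * Rabs y - eps) * (rm * Rabs y - eps) * / (2 * rm).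
  apply: Rmult_le_pos; [apply: Rle_0_sqr| lra].
lra.
Qed.

Lemma R_big rm eps gb y : 0 < rm -> 0 < eps -> Rabs gb <= eps ->
  ~ Rabs y < 2 * sqrt 2 * eps / rm ->
  rm / 2 * (y * y) + gb * y >= 0 /\ rm * (y * y) + gb * y >= eps * eps / rm.
Proof.
move=> hrm he hg hy. have [q2 q1] := sqrt2_facts. set q := sqrt 2 in q2 q1 hy.
have yy : Rabs y * Rabs y = y * y by rewrite -Rabs_mult Rabs_right; nra.
have ay : 0 <= Rabs y := Rabs_pos y.
have h : - (gb * y) <= eps * Rabs y.
  have := Rle_abs (- (gb * y)). rewrite Rabs_Ropp Rabs_mult. nra.
have hy' : 2 * q * eps <= rm * Rabs y.
  have : 2 * q * eps / rm <= Rabs y by lra.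
  move=> h'. have := Rmult_le_compat_l rm _ _ (Rlt_le _ _ hrm) h'.
  have -> : rm * (2 * q * eps / rm) = 2 * q * eps by field; lra. done.
have he2 : eps * eps / rm <= eps * Rabs y.
  have : eps * eps / rm = eps * (eps / rm) by field; lra.
  move=> ->. apply: Rmult_le_compat_l; first lra.
  have : eps / rm * rm <= Rabs y * rm.
    have -> : eps / rm * rm = eps by field; lra. nra.
  move=> hh. apply: (Rmult_le_reg_r rm); lra.
have k : 2 * eps * Rabs y <= rm * (y * y).
  rewrite -yy. have : 2 * eps <= rm * Rabs y by nra.
  move=> k0. have := Rmult_le_compat_r (Rabs y) _ _ ay k0. lra.
split; lra.
Qed.

Lemma bbar_grad d (Q : vec d -> R) g rm1 rp1 (H1 : RSC Q g 1 rm1 rp1) (hp : 0 < rp1) bbar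
  (Hbbar : forall b : vec d, (l0 b <= l0 bbar)%N -> Q bbar <= Q b) j :
  j \in supp bbar -> g bbar j = 0.
Proof.
move=> hj; apply: (zero_grad H1 hp) => t; apply: Hbbar.
apply: l0_le. exact: supp_ebump.
Qed.

Lemma sqp x : 0 <= x * x.
Proof. apply: Rle_0_sqr. Qed.

Ltac nrab := match goal with i : 'I__ |- _ =>
  match goal with b : vec _, bbar : vec _ |- _ =>
   (let q1 := fresh "q" in let q2 := fresh "q" in let q3 := fresh "q" in
    have q1 := sqp (b i - bbar i); have q2 := sqp (b i); have q3 := sqp (bbar i); nra) end end.

Lemma memD (d : nat) (A B : {set 'I_d}) (P : pred 'I_d) i :
  (i \in [set j in A :\: B | P j]) = [&& i \notin B, i \in A & P i].
Proof. by rewrite in_set in_setD andbA. Qed.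

Lemma output_claims d (Q : vec d -> R) g s rm rp rm1 rp1 (H1 : RSC Q g 1 rm1 rp1) (Hr : RSC Q g s rm rp)
  (hrm : 0 < rm) (hrp1 : 0 < rp1) bbar (Hbg : forall j, j \in supp bbar -> g bbar j = 0)
  eps (he : 0 < eps) (hE : eps * rm > 2 * sqrt 2 * rp1 * norm_inf (g bbar))
  F b (Hrm : restricted_min Q F b) (hcard : (#|F| + l0 bbar <= s)%N)
  (hbig : forall j, j \in F -> eps * eps <= 2 * (rp1 * rp1) * (b j * b j))
  (hstop : norm_inf (g b) < eps) :
  let gamma := 2 * sqrt 2 * eps / rm in
  let Fbar := supp bbar in
  let Dbar := INR #|[set j in Fbar :\: F | Rltb (Rabs (bbar j)) gamma]| in
  norm2 (vsub b bbar) <= 8 * eps ^ 2 / rm ^ 2 * Dbar /\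
  Q b - Q bbar <= eps ^ 2 / rm * Dbar /\
  rm ^ 2 / (8 * rp1 ^ 2) * INR #|F :\: Fbar| <= INR #|Fbar :\: F| /\
  INR #|Fbar :\: F| <= 2 * Dbar.
Proof.
move=> gamma Fbar Dbar. subst gamma Fbar Dbar.
set Ds := [set j in supp bbar :\: F | Rltb (Rabs (bbar j)) (2 * sqrt 2 * eps / rm)].
set Bg := [set j in supp bbar :\: F | ~~ Rltb (Rabs (bbar j)) (2 * sqrt 2 * eps / rm)].
set T := supp bbar :\: F.
set N := norm_inf (g bbar).
have hN : 0 <= N := norm_inf_ge0 _.
have l1 : (l0 (vsub b bbar) <= s)%N.
  have := l0_vsub (proj1 Hrm) (subxx (supp bbar)). rewrite /l0 in hcard *. lia.
have l2 : (l0 (vsub bbar b) <= s)%N.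
  have := l0_vsub (subxx (supp bbar)) (proj1 Hrm). rewrite /l0 in hcard *. lia.
have TS := two_sided Hr l1 l2.
have OS := one_sided Hr l2.
have hb0 : forall i, i \notin F -> b i = 0 := fun i => supp_zero (proj1 Hrm).
have hbb0 : forall i, i \notin supp bbar -> bbar i = 0 := fun i => @notin_supp d bbar i.
have hg0 : forall i, i \in F -> g b i = 0 := fun i => restricted_grad H1 hrp1 Hrm.
have hgb : forall i, Rabs (g b i) <= eps := fun i => Rlt_le _ _ (Rle_lt_trans _ _ _ (norm_inf_ge _ i) hstop).
have hgbb : forall i, Rabs (g bbar i) <= N := fun i => norm_inf_ge _ i.
set c := eps * eps / (2 * rm).
have hc : 0 < c by rewrite /c; apply: Rdiv_lt_0_compat; nra.
have hD : 0 <= INR #|Ds| := pos_INR _.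
have P1 : forall i, rm / 2 * ((b i - bbar i) * (b i - bbar i)) <=
   (rm * ((b i - bbar i) * (b i - bbar i)) + g bbar i * (b i - bbar i) + g b i * (bbar i - b i))
   + (if i \in Ds then c else 0).
  move=> i; rewrite /Ds memD.
  case hF: (i \in F); case hFb: (i \in supp bbar) => /=.
  - rewrite hg0 ?hF // Hbg ?hFb //. (have q1 := sqp (b i - bbar i); have q2 := sqp (b i); have q3 := sqp (bbar i); nra).
  - rewrite hg0 ?hF // hbb0 ?hFb //.
    have := R_cross (x := b i) hrm hrp1 he hN hE (hgbb i) (hbig i ltac:(by rewrite hF)). nra.
  - rewrite hb0 ?hF // Hbg ?hFb //.
    case: (Rltb _ _) (Rltb_true (Rabs (bbar i)) (2 * sqrt 2 * eps / rm)) => [[h _]|[_ h]] /=.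
    + have := R_small (bbar i) hrm he (hgb i). rewrite /c => hh. (have q1 := sqp (b i - bbar i); have q2 := sqp (b i); have q3 := sqp (bbar i); nra).
    + have [k _] := R_big (y := bbar i) hrm he (hgb i) ltac:(move=> /h; done). (have q1 := sqp (b i - bbar i); have q2 := sqp (b i); have q3 := sqp (bbar i); nra).
  - rewrite hb0 ?hF // hbb0 ?hFb //. (have q1 := sqp (b i - bbar i); have q2 := sqp (b i); have q3 := sqp (bbar i); nra).
have S1 := rsum_le P1. rewrite rsumD rsumZ rsum_ind in S1.
have N2 : norm2 (vsub b bbar) <= eps * eps / (rm * rm) * INR #|Ds|.
  change (norm2 (vsub b bbar)) with (rsum d (fun i => (b i - bbar i) * (b i - bbar i))).
  set X := rsum d (fun i => (b i - bbar i) * (b i - bbar i)) in S1 *.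
  have : rm / 2 * X <= c * INR #|Ds| by lra.
  rewrite /c => h.
  have -> : eps * eps / (rm * rm) * INR #|Ds| = 2 / rm * (eps * eps / (2 * rm) * INR #|Ds|) by field; lra.
  have -> : X = 2 / rm * (rm / 2 * X) by field; lra.
  apply: Rmult_le_compat_l => //. apply: Rlt_le; apply: Rdiv_lt_0_compat; lra.
have P2 : forall i, g b i * (b i - bbar i) - rm / 2 * ((b i - bbar i) * (b i - bbar i)) <=
   (if i \in Ds then c else 0).
  move=> i; rewrite /Ds memD.
  case hF: (i \in F); case hFb: (i \in supp bbar) => /=.
  - rewrite hg0 ?hF //. (have q1 := sqp (b i - bbar i); have q2 := sqp (b i); have q3 := sqp (bbar i); nra).
  - rewrite hg0 ?hF //. (have q1 := sqp (b i - bbar i); have q2 := sqp (b i); have q3 := sqp (bbar i); nra).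
  - rewrite hb0 ?hF //.
    have hgn : Rabs (- g b i) <= eps by rewrite Rabs_Ropp.
    case: (Rltb _ _) (Rltb_true (Rabs (bbar i)) (2 * sqrt 2 * eps / rm)) => [[h _]|[_ h]] /=.
    + have := R_small (bbar i) hrm he (hgb i). rewrite /c => hh. (have q1 := sqp (b i - bbar i); have q2 := sqp (b i); have q3 := sqp (bbar i); nra).
    + have [k _] := R_big (y := bbar i) hrm he (hgb i) ltac:(move=> /h; done). (have q1 := sqp (b i - bbar i); have q2 := sqp (b i); have q3 := sqp (bbar i); nra).
  - rewrite hb0 ?hF // hbb0 ?hFb //. (have q1 := sqp (b i - bbar i); have q2 := sqp (b i); have q3 := sqp (bbar i); nra).
have S2 := rsum_le P2. rewrite rsum_ind in S2.
have P4 : forall i, (if i \in Bg then eps * eps / rm else 0) <=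
   (rm * ((b i - bbar i) * (b i - bbar i)) + g bbar i * (b i - bbar i) + g b i * (bbar i - b i))
   + (if i \in Ds then c else 0).
  have he2 : 0 < eps * eps / rm by apply: Rdiv_lt_0_compat; nra.
  move=> i; rewrite /Ds /Bg !memD.
  case hF: (i \in F); case hFb: (i \in supp bbar) => /=.
  - rewrite hg0 ?hF // Hbg ?hFb //. (have q1 := sqp (b i - bbar i); have q2 := sqp (b i); have q3 := sqp (bbar i); nra).
  - rewrite hg0 ?hF // hbb0 ?hFb //.
    have := R_cross (x := b i) hrm hrp1 he hN hE (hgbb i) (hbig i ltac:(by rewrite hF)). nra.
  - rewrite hb0 ?hF // Hbg ?hFb //.
    case: (Rltb _ _) (Rltb_true (Rabs (bbar i)) (2 * sqrt 2 * eps / rm)) => [[h _]|[_ h]] /=.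
    + have := R_small (bbar i) hrm he (hgb i). rewrite /c => hh. (have q1 := sqp (b i - bbar i); have q2 := sqp (b i); have q3 := sqp (bbar i); nra).
    + have [_ k] := R_big (y := bbar i) hrm he (hgb i) ltac:(move=> /h; done). (have q1 := sqp (b i - bbar i); have q2 := sqp (b i); have q3 := sqp (bbar i); nra).
  - rewrite hb0 ?hF // hbb0 ?hFb //. (have q1 := sqp (b i - bbar i); have q2 := sqp (b i); have q3 := sqp (bbar i); nra).
have S4 := rsum_le P4. rewrite rsumD !rsum_ind in S4.
have PT : forall i, (if i \in T then 1 else 0) = (if i \in Bg then 1 else 0) + (if i \in Ds then 1 else 0).
  move=> i; rewrite /T /Ds /Bg !memD in_setD.
  case: (i \in F); case: (i \in supp bbar); case: (Rltb _ _) => /=; ring.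
have ST := rsum_ext PT. rewrite rsumD !rsum_ind !Rmult_1_l in ST.
have hBg : 0 <= INR #|Bg| := pos_INR _.
have hBg2 : INR #|Bg| <= INR #|Ds|.
  have : eps * eps / rm * INR #|Bg| <= c * INR #|Ds| by lra.
  rewrite /c => h. apply: Rnot_lt_le => hc2.
  have : eps * eps / rm * INR #|Ds| < eps * eps / rm * INR #|Bg|.
    apply: Rmult_lt_compat_l => //. apply: Rdiv_lt_0_compat; nra.
  have : eps * eps / (2 * rm) * INR #|Ds| <= eps * eps / rm * INR #|Ds|.
    apply: Rmult_le_compat_r => //.
    have -> : eps * eps / (2 * rm) = (eps * eps / rm) / 2 by field; lra.
    have : 0 < eps * eps / rm by apply: Rdiv_lt_0_compat; nra. lra.
  lra.
set c3 := eps * eps / (2 * (rp1 * rp1)).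
have P3 : forall i, (if i \in F :\: supp bbar then c3 else 0) <= (b i - bbar i) * (b i - bbar i).
  move=> i; rewrite in_setD.
  case hF: (i \in F); case hFb: (i \in supp bbar) => /=; try (have q1 := sqp (b i - bbar i); lra).
  rewrite hbb0 ?hFb // Rminus_0_r. have := hbig i ltac:(by rewrite hF).
  rewrite /c3 => h. apply: (Rmult_le_reg_l (2 * (rp1 * rp1))); first nra.
  have -> : 2 * (rp1 * rp1) * (eps * eps / (2 * (rp1 * rp1))) = eps * eps by field; lra. done.
have S3 := rsum_le P3. rewrite rsum_ind in S3.
change (rsum d (fun i => (b i - bbar i) * (b i - bbar i))) with (norm2 (vsub b bbar)) in S3.
have DT : INR #|Ds| <= INR #|T| by lra.
set X := INR #|F :\: supp bbar| in S3 *.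
have hX : 0 <= X := pos_INR _.
have S3' : c3 * X <= norm2 (vsub b bbar) := S3.
have hc3 : 0 < c3 by rewrite /c3; apply: Rdiv_lt_0_compat; nra.
have K3 : rm ^ 2 / (2 * rp1 ^ 2) * X <= INR #|Ds|.
  have e1 : rm ^ 2 / (2 * rp1 ^ 2) * X = (rm * rm / (eps * eps)) * (c3 * X) by rewrite /c3; field; lra.
  have e2 : INR #|Ds| = (rm * rm / (eps * eps)) * (eps * eps / (rm * rm) * INR #|Ds|) by field; lra.
  rewrite e1 e2. apply: Rmult_le_compat_l; first by apply: Rlt_le; apply: Rdiv_lt_0_compat; nra.
  lra.
have K3' : rm ^ 2 / (8 * rp1 ^ 2) * X <= rm ^ 2 / (2 * rp1 ^ 2) * X.
  apply: Rmult_le_compat_r => //.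
  have -> : rm ^ 2 / (8 * rp1 ^ 2) = (rm ^ 2 / (2 * rp1 ^ 2)) / 4 by field; lra.
  have : 0 < rm ^ 2 / (2 * rp1 ^ 2) by apply: Rdiv_lt_0_compat; nra. lra.
have e8 : 8 * eps ^ 2 / rm ^ 2 * INR #|Ds| = 8 * (eps * eps / (rm * rm) * INR #|Ds|) by field; lra.
have e9 : eps ^ 2 / rm * INR #|Ds| = 2 * (c * INR #|Ds|) by rewrite /c; field; lra.
have : 0 <= eps * eps / (rm * rm) * INR #|Ds|.
  apply: Rmult_le_pos => //. apply: Rlt_le; apply: Rdiv_lt_0_compat; nra.
have : 0 <= c * INR #|Ds| by nra.
split; [|split; [|split]]; lra.
Qed.

Lemma R_fw rm G S x : 0 < rm -> 0 <= G -> rm / 2 * S <= G * Rabs x -> x * x <= S ->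
  rm * rm * S <= 4 * (G * G).
Proof.
move=> hrm hG h1 h2.
have ax : 0 <= Rabs x := Rabs_pos x.
have xx : Rabs x * Rabs x = x * x by rewrite -Rabs_mult Rabs_right; nra.
have h3 : rm * Rabs x <= 2 * G.
  have : rm / 2 * (Rabs x * Rabs x) <= G * Rabs x by nra.
  move=> h. case: (Req_dec (Rabs x) 0) => [->|hn]; first nra.
  have hp : 0 < Rabs x by lra.
  apply: (Rmult_le_reg_r (Rabs x)) => //. nra.
have : rm * rm * S <= 2 * rm * (G * Rabs x) by nra.
nra.
Qed.

Lemma rsc_consts d (Q : vec d -> R) g s rm rp rm1 rp1 (H1 : RSC Q g 1 rm1 rp1) (Hr : RSC Q g s rm rp)
  (hs : (0 < s)%N) (j : 'I_d) : rm <= rp /\ rm <= rp1.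
Proof.
have hl : (l0 (vsub (ebump (@vzero d) j 1) (@vzero d)) <= 1)%N by rewrite vsub_ebump; apply: l0_basis.
have [A B] := Hr (@vzero d) (ebump (@vzero d) j 1) ltac:(apply: leq_trans hl hs).
have [_ C] := H1 (@vzero d) (ebump (@vzero d) j 1) hl.
move: A B C; rewrite vsub_ebump norm2_basis. lra.
Qed.

Lemma R_final rm rp rp1 K x s : 0 < rm -> rm <= rp -> rm <= rp1 -> 0 <= K ->
  x <= 4 * (rp1 * rp1 / (rm * rm)) * (K + 4) + K ->
  s - K > (K + 1) * ((sqrt (rp / rm) + 1) * (2 * rp1 / rm)) ^ 2 ->
  x + K < s.
Proof.
move=> hrm h1 h2 hK hx hs.
set r := rp1 * rp1 / (rm * rm) in hx.
have hr : 1 <= r.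
  rewrite /r. have -> : rp1 * rp1 / (rm * rm) = (rp1 / rm) * (rp1 / rm) by field; lra.
  have : 1 <= rp1 / rm.
    apply: (Rmult_le_reg_r rm) => //. have -> : rp1 / rm * rm = rp1 by field; lra. lra.
  nra.
have hA : 1 <= sqrt (rp / rm).
  rewrite -sqrt_1; apply: sqrt_le_1_alt.
  apply: (Rmult_le_reg_r rm) => //. have -> : rp / rm * rm = rp by field; lra. lra.
have e : ((sqrt (rp / rm) + 1) * (2 * rp1 / rm)) ^ 2 = (sqrt (rp / rm) + 1) * (sqrt (rp / rm) + 1) * 4 * r.
  rewrite /r; field; lra.
rewrite e in hs.
have : 4 <= (sqrt (rp / rm) + 1) * (sqrt (rp / rm) + 1) by nra.
move=> h4.
have : 16 * r <= (sqrt (rp / rm) + 1) * (sqrt (rp / rm) + 1) * 4 * r by nra.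
move=> h5.
have : (K + 1) * (16 * r) <= (K + 1) * ((sqrt (rp / rm) + 1) * (sqrt (rp / rm) + 1) * 4 * r).
  apply: Rmult_le_compat_l; lra.
nra.
Qed.

Lemma fwd_grad d (Q : vec d -> R) g rm1 rp1 (H1 : RSC Q g 1 rm1 rp1) (hrp1 : 0 < rp1) eps F b i :
  restricted_min Q F b -> ~ norm_inf (g b) < eps -> i \notin F ->
  (forall i', i' \notin F -> Rabs (g b i') <= Rabs (g b i)) ->
  eps <= Rabs (g b i) /\ forall j, Rabs (g b j) <= Rabs (g b i).
Proof.
move=> Hrm hn hi hmax.
have hall : forall j, Rabs (g b j) <= Rabs (g b i).
  move=> j. case hj: (j \in F).
  - rewrite (restricted_grad H1 hrp1 Hrm hj) Rabs_R0; apply: Rabs_pos.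
  - apply: hmax; by rewrite hj.
split => //. have := norm_inf_le (Rabs_pos _) hall. lra.
Qed.

Lemma forward_step d (Q : vec d -> R) g s rm rp rm1 rp1 (H1 : RSC Q g 1 rm1 rp1) (Hr : RSC Q g s rm rp)
  (hs : (0 < s)%N) (hrm : 0 < rm) (hrp1 : 0 < rp1) bbar (Hbg : forall j, j \in supp bbar -> g bbar j = 0)
  (Hs : INR s - INR (l0 bbar) >
        (INR (l0 bbar) + 1) * ((sqrt (rp / rm) + 1) * (2 * rp1 / rm)) ^ 2)
  eps (he : 0 < eps) (hE : eps * rm > 2 * sqrt 2 * rp1 * norm_inf (g bbar))
  F b i b' (Hrm : restricted_min Q F b) (hcard : (#|F| + l0 bbar < s)%N)
  (hbig : forall j, j \in F -> eps * eps <= 2 * (rp1 * rp1) * (b j * b j))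
  (hn : ~ norm_inf (g b) < eps) (hi : i \notin F)
  (hmax : forall i', i' \notin F -> Rabs (g b i') <= Rabs (g b i))
  (Hr' : restricted_min Q (i |: F) b')
  (Hall : forall j, j \in i |: F -> Q (drop_coord b' j) - Q b' >= (Q b - Q b') / 2) :
  (#|i |: F| + l0 bbar < s)%N.
Proof.
have [rr1 rr2] := rsc_consts H1 Hr hs i.
have [hG hGall] := fwd_grad H1 hrp1 Hrm hn hi hmax.
set G := Rabs (g b i) in hG hGall.
have hG0 : 0 < G by lra.
have GG : g b i * g b i = G * G by rewrite /G -Rabs_mult Rabs_right //; apply: Rle_ge; apply: Rle_0_sqr.
have hgain := forward_gain H1 hrp1 Hr' (proj1 Hrm).
rewrite GG in hgain.
set dl := Q b - Q b' in Hall.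
have hdl : G * G / (2 * rp1) <= dl by rewrite /dl; lra.
have hF' : #|i |: F| = (#|F|).+1 by rewrite cardsU1 hi.
have hb0 : forall j, j \notin F -> b j = 0 := fun j => supp_zero (proj1 Hrm).
have hb'0 : forall j, j \notin i |: F -> b' j = 0 := fun j => supp_zero (proj1 Hr').
have hbb0 : forall j, j \notin supp bbar -> bbar j = 0 := fun j => @notin_supp d bbar j.
have hg0 : forall j, j \in F -> g b j = 0 := fun j => restricted_grad H1 hrp1 Hrm.
have hgbb : forall j, Rabs (g bbar j) <= norm_inf (g bbar) := fun j => norm_inf_ge _ j.
have hN : 0 <= norm_inf (g bbar) := norm_inf_ge0 _.
set K := INR (l0 bbar).
have hK : 0 <= K := pos_INR _.
have hb'big : forall j, j \in i |: F -> G * G <= 2 * (rp1 * rp1) * (b' j * b' j).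
  move=> j hj. have c1 := drop_cost H1 hrp1 Hr' hj. have c2 := Hall j hj.
  have : G * G / (2 * rp1) <= rp1 * (b' j * b' j) by lra.
  move=> h. have e : G * G = 2 * rp1 * (G * G / (2 * rp1)) by field; lra.
  rewrite e. have : 0 < 2 * rp1 by lra. nra.
have l1 : (l0 (vsub b bbar) <= s)%N.
  have := l0_vsub (proj1 Hrm) (subxx (supp bbar)). rewrite /l0 in hcard *. lia.
have l2 : (l0 (vsub bbar b) <= s)%N.
  have := l0_vsub (subxx (supp bbar)) (proj1 Hrm). rewrite /l0 in hcard *. lia.
have TS := two_sided Hr l1 l2.
set c := G * G / (2 * rm).
have hc0 : 0 <= c by rewrite /c; apply: Rmult_le_pos; [nra| apply: Rlt_le; apply: Rinv_0_lt_compat; lra].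
have Pa : forall j, rm / 2 * ((b j - bbar j) * (b j - bbar j)) <=
   (rm * ((b j - bbar j) * (b j - bbar j)) + g bbar j * (b j - bbar j) + g b j * (bbar j - b j))
   + (if j \in supp bbar then c else 0).
  move=> j. have q1 := sqp (b j - bbar j). have q2 := sqp (b j). have q3 := sqp (bbar j).
  case hF: (j \in F); case hFb: (j \in supp bbar) => /=.
  - rewrite hg0 ?hF // Hbg ?hFb //. nra.
  - rewrite hg0 ?hF // hbb0 ?hFb //.
    have := R_cross (x := b j) hrm hrp1 he hN hE (hgbb j) (hbig j ltac:(by rewrite hF)). nra.
  - rewrite hb0 ?hF // Hbg ?hFb //.
    have := R_small (bbar j) hrm hG0 (hGall j). rewrite /c => hh. nra.
  - rewrite hb0 ?hF // hbb0 ?hFb //. nra.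
have Sa := rsum_le Pa. rewrite rsumD rsumZ rsum_ind in Sa.
have Na : rsum d (fun j => (b j - bbar j) * (b j - bbar j)) <= K * (G * G) / (rm * rm).
  set X := rsum d (fun j => (b j - bbar j) * (b j - bbar j)) in Sa *.
  have : rm / 2 * X <= c * K by rewrite /K /l0; lra.
  rewrite /c => h.
  have -> : K * (G * G) / (rm * rm) = 2 / rm * (G * G / (2 * rm) * K) by field; lra.
  have -> : X = 2 / rm * (rm / 2 * X) by field; lra.
  apply: Rmult_le_compat_l => //. apply: Rlt_le; apply: Rdiv_lt_0_compat; lra.
have l3 : (l0 (vsub b' b) <= s)%N.
  have : supp (vsub b' b) \subset i |: F.
    apply: supp_sub => j hj. rewrite /vsub hb'0 // hb0; first ring.
    by apply: contra hj; rewrite in_setU => ->; rewrite orbT.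
  move/l0_le. rewrite hF'. move: hcard. lia.
have [B _] := Hr b b' l3.
have Einner : inner (g b) (vsub b' b) = g b i * b' i.
  rewrite /inner -(rsum_single i (g b i * b' i)). apply: rsum_ext => j.
  rewrite /vsub. case: eqP => [->|hne]; first by rewrite hb0 //; ring.
  case hF: (j \in F); first by rewrite hg0 ?hF //; ring.
  rewrite hb0 ?hF // hb'0; first ring.
  rewrite in_setU in_set1 hF orbF. by apply/eqP.
have Ex : b' i * b' i <= norm2 (vsub b' b).
  rewrite /norm2 /inner -(rsum_single i (b' i * b' i)). apply: rsum_le => j.
  rewrite /vsub. case: eqP => [->|_]; first by rewrite hb0 //; lra.
  apply: sqp.
rewrite Einner in B.
have hdl0 : 0 <= dl.
  have : 0 <= G * G / (2 * rp1) by apply: Rmult_le_pos; [nra| apply: Rlt_le; apply: Rinv_0_lt_compat; lra].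
  lra.
have B' : rm / 2 * norm2 (vsub b' b) <= G * Rabs (b' i).
  have := Rle_abs (- (g b i * b' i)). rewrite Rabs_Ropp Rabs_mult -/G. rewrite /dl in hdl0. lra.
have Nb := R_fw hrm (Rlt_le _ _ hG0) B' Ex.
have Pd : forall j, (if j \in (i |: F) :\: supp bbar then G * G / (2 * (rp1 * rp1)) else 0) <=
    2 * ((b' j - b j) * (b' j - b j)) + 2 * ((b j - bbar j) * (b j - bbar j)).
  move=> j. have q1 := sqp (b' j - b j). have q2 := sqp (b j - bbar j).
  have q3 : (b' j - bbar j) * (b' j - bbar j) <= 2 * ((b' j - b j) * (b' j - b j)) + 2 * ((b j - bbar j) * (b j - bbar j)).
    have := sqp (b' j - b j - (b j - bbar j)). nra.
  rewrite in_setD. case hFb: (j \in supp bbar) => /=; first lra.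
  case hj: (j \in i |: F) => /=; last lra.
  have e0 := hbb0 j ltac:(by rewrite hFb). rewrite e0 in q3 *.
  have := hb'big j hj. move=> h.
  have : G * G / (2 * (rp1 * rp1)) <= b' j * b' j.
    apply: (Rmult_le_reg_l (2 * (rp1 * rp1))); first nra.
    have -> : 2 * (rp1 * rp1) * (G * G / (2 * (rp1 * rp1))) = G * G by field; lra. done.
  lra.
have Sd := rsum_le Pd. rewrite rsumD !rsumZ rsum_ind in Sd.
set Y := INR #|(i |: F) :\: supp bbar| in Sd.
have Sd' : G * G / (2 * (rp1 * rp1)) * Y <= 2 * norm2 (vsub b' b) + 2 * rsum d (fun j => (b j - bbar j) * (b j - bbar j)) := Sd.
clear Sd.
set S := norm2 (vsub b' b) in Sd' Nb.
set Z := rsum d (fun j => (b j - bbar j) * (b j - bbar j)) in Sd' Na.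
have hY : Y <= 4 * (rp1 * rp1 / (rm * rm)) * (K + 4).
  have hS : S <= 4 * (G * G) / (rm * rm).
    have -> : S = (rm * rm * S) / (rm * rm) by field; lra.
    apply: Rmult_le_compat_r; last lra. apply: Rlt_le; apply: Rinv_0_lt_compat; nra.
  have h : G * G / (2 * (rp1 * rp1)) * Y <= (G * G) * (2 * (K + 4) / (rm * rm)).
    have -> : (G * G) * (2 * (K + 4) / (rm * rm)) = 2 * (4 * (G * G) / (rm * rm)) + 2 * (K * (G * G) / (rm * rm)) by field; lra.
    lra.
  have e1 : Y = (2 * (rp1 * rp1) / (G * G)) * (G * G / (2 * (rp1 * rp1)) * Y) by field; nra.
  have e2 : 4 * (rp1 * rp1 / (rm * rm)) * (K + 4) = (2 * (rp1 * rp1) / (G * G)) * ((G * G) * (2 * (K + 4) / (rm * rm))) by field; nra.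
  rewrite e1 e2. apply: Rmult_le_compat_l => //. apply: Rlt_le; apply: Rdiv_lt_0_compat; nra.
have hc : (#|i |: F| <= #|(i |: F) :\: supp bbar| + l0 bbar)%N.
  have := cardsID (supp bbar) (i |: F). have := subset_leq_card (subsetIr (i |: F) (supp bbar)).
  rewrite /l0. lia.
have hcR : INR #|i |: F| <= Y + K.
  rewrite /Y /K -plus_INR. apply: le_INR. by apply/leP.
have hx : INR #|i |: F| <= 4 * (rp1 * rp1 / (rm * rm)) * (K + 4) + K by lra.
have := R_final hrm rr1 rr2 hK hx Hs.
move=> h. apply/ltP. apply: INR_lt. rewrite plus_INR. rewrite /K in h. lra.
Qed.

Scheme foba_iter_mut := Induction for foba_iter Sort Prop
with foba_back_mut := Induction for foba_back Sort Prop.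

Lemma invariant d (Q : vec d -> R) g s rm rp rm1 rp1 (H1 : RSC Q g 1 rm1 rp1) (Hr : RSC Q g s rm rp)
  (hs : (0 < s)%N) (hrm : 0 < rm) (hrp1 : 0 < rp1) bbar (Hbg : forall j, j \in supp bbar -> g bbar j = 0)
  (Hs : INR s - INR (l0 bbar) >
        (INR (l0 bbar) + 1) * ((sqrt (rp / rm) + 1) * (2 * rp1 / rm)) ^ 2)
  eps (he : 0 < eps) (hE : eps * rm > 2 * sqrt 2 * rp1 * norm_inf (g bbar)) F b dl :
  foba_iter Q g eps F b dl ->
  restricted_min Q F b /\ (#|F| + l0 bbar < s)%N /\
  (forall m, (0 < m)%N -> (m <= #|F|)%N -> eps * eps / (2 * rp1) <= dl m) /\
  (forall j, j \in F -> eps * eps <= 2 * (rp1 * rp1) * (b j * b j)).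
Proof.
set c := eps * eps / (2 * rp1).
have hc : 0 < c by rewrite /c; apply: Rdiv_lt_0_compat; nra.
move=> H.
apply: (@foba_iter_mut d Q g eps
  (fun F b dl _ => restricted_min Q F b /\ (#|F| + l0 bbar < s)%N /\
    (forall m, (0 < m)%N -> (m <= #|F|)%N -> c <= dl m) /\
    (forall j, j \in F -> eps * eps <= 2 * (rp1 * rp1) * (b j * b j)))
  (fun F b dl _ => restricted_min Q F b /\ (#|F| + l0 bbar <= s)%N /\
    (forall m, (0 < m)%N -> (m <= #|F|)%N -> c <= dl m) /\
    ((forall j, j \in F -> Q (drop_coord b j) - Q b >= dl #|F| / 2) -> (#|F| + l0 bbar < s)%N))
  _ _ _ _ F b dl H).
-
  split; [|split; [|split]].
  + split; first by apply: supp_sub.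
    move=> b' hb'. have -> : b' = @vzero d; last lra.
    apply: functional_extensionality => j. apply: (supp_zero hb'). by rewrite inE.
  + rewrite cards0 add0n. apply/ltP. apply: INR_lt.
    have : 0 <= (INR (l0 bbar) + 1) * ((sqrt (rp / rm) + 1) * (2 * rp1 / rm)) ^ 2.
      apply: Rmult_le_pos; [have := pos_INR (l0 bbar); lra| apply: pow2_ge_0].
    lra.
  + move=> m h1 h2. rewrite cards0 in h2. lia.
  + move=> j; by rewrite inE.
-
  move=> F0 b0 dl0 Hb [Hr0 [Hc0 [Hd0 Himp]]] Hex.
  have Hall : forall j, j \in F0 -> Q (drop_coord b0 j) - Q b0 >= dl0 #|F0| / 2.
    case: Hex => [-> j|//]; by rewrite inE.
  split; [done|split; [exact: Himp Hall|split; [done|]]].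
  move=> j hj. have c1 := drop_cost H1 hrp1 Hr0 hj. have c2 := Hall j hj.
  have c3 : c <= dl0 #|F0| by apply: Hd0 => //; apply/card_gt0P; exists j.
  have : c <= rp1 * (b0 j * b0 j) by lra.
  rewrite /c => h. have e : eps * eps = 2 * rp1 * (eps * eps / (2 * rp1)) by field; lra.
  rewrite e. nra.
-
  move=> F0 b0 dl0 i b' Hit [Hr0 [Hc0 [Hd0 Hbig0]]] hn hi hmax Hr'.
  have hF' : #|i |: F0| = (#|F0|).+1 by rewrite cardsU1 hi.
  split; [done|split; [rewrite hF'; lia|split]].
  + move=> m h1 h2. case: eqP => [em|ne].
    * have [hG _] := fwd_grad H1 hrp1 Hr0 hn hi hmax.
      have := forward_gain H1 hrp1 Hr' (proj1 Hr0).
      have : eps * eps <= g b0 i * g b0 i.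
        have -> : g b0 i * g b0 i = Rabs (g b0 i) * Rabs (g b0 i) by rewrite -Rabs_mult Rabs_right //; apply: Rle_ge; apply: Rle_0_sqr.
        nra.
      move=> h3 h4. rewrite /c.
      have : eps * eps / (2 * rp1) <= g b0 i * g b0 i / (2 * rp1).
        apply: Rmult_le_compat_r => //. apply: Rlt_le; apply: Rinv_0_lt_compat; lra.
      lra.
    * apply: Hd0 => //. rewrite hF' in h2. move/eqP: ne. lia.
  + move=> Hall. rewrite hF' eqxx in Hall.
    apply: (forward_step H1 Hr hs hrm hrp1 Hbg Hs he hE Hr0 Hc0 Hbig0 hn hi hmax Hr').
    move=> j hj. exact: Hall j hj.
-
  move=> F0 b0 dl0 j b' Hb [Hr0 [Hc0 [Hd0 Himp]]] hj hlt hmin Hr'.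
  have hc1 := cardsD1 j F0. rewrite hj in hc1.
  split; [done|split; [lia|split]].
  + move=> m h1 h2. apply: Hd0 => //. lia.
  + move=> _. lia.
Qed.

Unset Implicit Arguments.
Theorem theorem5 (d : nat) (Q : vec d -> R) (g : vec d -> vec d)
  (Qconv : convex Q) (QC1 : C1_with_grad Q g)
  (Hexist : forall F : {set 'I_d}, exists b, restricted_min Q F b)
  (s : nat) (s_pos : (0 < s)%N)
  (rm_s rp_s rp_1 : R) (rm_s_pos : 0 < rm_s) (rp_s_pos : 0 < rp_s) (rp_1_pos : 0 < rp_1)
  (Hrsc_s : RSC Q g s rm_s rp_s) (Hrsc_1 : exists rm_1, 0 < rm_1 /\ RSC Q g 1 rm_1 rp_1)
  (bbar : vec d)
  (Hbbar : forall b : vec d, (l0 b <= l0 bbar)%N -> Q bbar <= Q b)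
  (Hs : INR s - INR (l0 bbar) >
        (INR (l0 bbar) + 1) * ((sqrt (rp_s / rm_s) + 1) * (2 * rp_1 / rm_s)) ^ 2)
  (eps : R)
  (Heps : eps > 2 * sqrt 2 * rp_1 / rm_s * norm_inf (g bbar))
  (F : {set 'I_d}) (b : vec d) (Hout : foba_gdt_output Q g eps F b) :
  let gamma := 2 * sqrt 2 * eps / rm_s in
  let Fbar := supp bbar in
  let Dbar := INR #|[set j in Fbar :\: F | Rltb (Rabs (bbar j)) gamma]| in
  norm2 (vsub b bbar) <= 8 * eps ^ 2 / rm_s ^ 2 * Dbar /\
  Q b - Q bbar <= eps ^ 2 / rm_s * Dbar /\
  rm_s ^ 2 / (8 * rp_1 ^ 2) * INR #|F :\: Fbar| <= INR #|Fbar :\: F| /\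
  INR #|Fbar :\: F| <= 2 * Dbar.
Proof.
have [rm1 [_ H1]] := Hrsc_1.
have [dl [Hit Hstop]] := Hout.
have hN := norm_inf_ge0 (g bbar).
have [q2 q1] := sqrt2_facts.
have hpos : 0 <= 2 * sqrt 2 * rp_1 / rm_s * norm_inf (g bbar).
  apply: Rmult_le_pos => //. apply: Rmult_le_pos; last by apply: Rlt_le; apply: Rinv_0_lt_compat.
  nra.
have he : 0 < eps by lra.
have hE : eps * rm_s > 2 * sqrt 2 * rp_1 * norm_inf (g bbar).
  have e : 2 * sqrt 2 * rp_1 * norm_inf (g bbar) = (2 * sqrt 2 * rp_1 / rm_s * norm_inf (g bbar)) * rm_s by field; lra.
  rewrite e. apply: Rmult_gt_compat_r => //.
have Hbg := bbar_grad H1 rp_1_pos Hbbar.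
have [Hr0 [Hc0 [_ Hbig0]]] := invariant H1 Hrsc_s s_pos rm_s_pos rp_1_pos Hbg Hs he hE Hit.
exact: (output_claims H1 Hrsc_s rm_s_pos rp_1_pos Hbg he hE Hr0 (ltnW Hc0) Hbig0 Hstop).
Qed.
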